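(* Let $\mu^s$ be a positive policy. Then: (a) for every $x\in\mathcal X$, $\kappa(\mu^s|x)=\max_{a\in\mathcal A(x)}\frac{1}{\mu^s(a|x)}\Big(1+\sum_{x'\text{ directly follows }(x,a)}\kappa(\mu^s|x')\Big)$; (b) $\kappa(\mu^s)=\sum_{x\in\mathcal X_1}\kappa(\mu^s|x)$; (c) for every $x\in\mathcal X$, $\kappa(\mu^s|x)\ge A^\tau(x)$, with equality for all $x$ simultaneously when $\mu^s=\mu^\star$, the balanced policy defined by $\mu^\star(a|x)=A^\tau(x,a)/A^\tau(x)$; (d) $\kappa(\mu^\star)=A_{\mathcal X}$.
   Context: Game structure. Fix $H\ge1$. The min-player's information sets form a finite set $\mathcal X$; each $x$ has a depth $h(x)\in\{1,\dots,H\}$ and a finite nonempty action set $\mathcal A(x)$; $\mathcal X_1$ is the set of depth-1 information sets. Perfect recall: every $x$ of depth $h$ has a unique history $(x_1,a_1,\dots,x_{h-1},a_{h-1},x_h=x)$ with $x_i$ of depth $i$, $a_i\in\mathcal A(x_i)$, and histories extend each other along the tree. $x'$ directly follows $(x,a)$ if $h(x')=h(x)+1$ and the history of $x'$ contains $x$ followed by $a$; $x$ is in the history of $x'$ if $x=x'_i$ for some $i$ (including $x=x'$); $(x,a)$ is in the history of $x'$ if $x$ is in the history of $x'$, $x\neq x'$, and the history of $x'$ contains $x$ followed by $a$. $A_{\mathcal X}=\sum_x|\mathcal A(x)|$. A policy is $\mu=(\mu(\cdot|x))_x$, $\mu(\cdot|x)\in\Delta_{\mathcal A(x)}$; $\Pi_{\min}$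 the set of policies; positive if all $\mu(a|x)>0$. Realization plan: $\mu_{1:}(x,a)=\prod_{i=1}^h\mu(a_i|x_i)$ (with $a_h=a$). For $x$ of depth $h$ and $(x',a')$ with $x$ in the history of $x'$ ($x'$ of depth $h'$, history $(x'_1,a'_1,\dots,x'_{h'})$, $a'_{h'}=a'$): $\mu_{h:}(x',a')=\prod_{i=h}^{h'}\mu(a'_i|x'_i)$. Define $\kappa(\mu^s)=\max_{\mu\in\Pi_{\min}}\sum_{x,a}\mu_{1:}(x,a)/\mu^s_{1:}(x,a)$ and, for $x$ of depth $h$, $\kappa(\mu^s|x)=\max_{\mu\in\Pi_{\min}}\sum_{x':\,x\text{ in history of }x'}\sum_{a'\in\mathcal A(x')}\mu_{h:}(x',a')/\mu^s_{h:}(x',a')$. Subtree action counts: $A^\tau(x,a)=1+\sum_{x':\,(x,a)\text{ in history of }x'}|\mathcal A(x')|$ and $A^\tau(x)=\sum_{a\in\mathcal A(x)}A^\tau(x,a)$. *)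

(* Defs.v *)
From HB Require Import structures.
From mathcomp Require Import all_boot all_order all_algebra.
From mathcomp Require Import boolp classical_sets reals.
Set Implicit Arguments. Unset Strict Implicit. Unset Printing Implicit Defensive.
Import Order.TTheory GRing.Theory Num.Theory.
Local Open Scope ring_scope.

(* The min-player's information-set tree.  Perfect recall is encoded by a
   parent map: the history of x is the history of its parent (y,a) followed
   by (y,a,x); depth-1 information sets have no parent. *)
Record game := Game {
  H : nat;
  Xt : finType;                       (* information sets *)
  Act : finType;
  acts : Xt -> {set Act};
  depth : Xt -> nat;
  par : Xt -> option (Xt * Act);      (* last (x_{h-1}, a_{h-1}) of the history *)
  H_ge1 : (1 <= H)%N;
  depth_range : forall x, (1 <= depth x <= H)%N;
  acts_nonempty : forall x, acts x != finset.set0;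
  par_none : forall x, par x = None <-> depth x = 1%N;
  par_some : forall x y a, par x = Some (y, a) ->
      depth x = (depth y).+1 /\ a \in acts y
}.

Section Defs.
Variable R : realType.
Variable G : game.
Local Notation X := (Xt G).
Local Notation A := (Act G).

Fixpoint anc (n : nat) (x : X) : option X :=
  match n with
  | 0 => Some x
  | n.+1 => if par x is Some (y, _) then anc n y else None
  end.

(* x is in the history of x' (x = x'_{h(x)}), including x = x' *)
Definition inhist (x x' : X) : bool :=
  (depth x <= depth x')%N && (anc (depth x' - depth x) x' == Some x).

Definition follows (x : X) (a : A) (x' : X) : bool := par x' == Some (x, a).

Definition inhist_act (x : X) (a : A) (x' : X) : bool :=
  [&& inhist x x', x != x' & [exists y, inhist y x' && follows x a y]].

Definition X1 : {set X} := [set x | depth x == 1%N].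

Definition policy (mu : X -> A -> R) : Prop :=
  forall x, (forall a, a \in acts x -> 0 <= mu x a) /\
            \sum_(a in acts x) mu x a = 1.

Definition positive_policy (mu : X -> A -> R) : Prop :=
  forall x a, a \in acts x -> 0 < mu x a.

(* product of mu(a_i|x_i) over the strict history of x (fuel = depth) *)
Fixpoint pathprod (mu : X -> A -> R) (n : nat) (x : X) : R :=
  match n with
  | 0 => 1
  | n.+1 => if par x is Some (y, a) then mu y a * pathprod mu n y else 1
  end.

Definition real1 (mu : X -> A -> R) (x : X) (a : A) : R :=
  mu x a * pathprod mu (depth x) x.

(* product of mu(a_i|x_i) over the history of x' strictly before x',
   from depth h(x) on (fuel = depth) *)
Fixpoint segprod (mu : X -> A -> R) (x : X) (n : nat) (x' : X) : R :=
  match n with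
  | 0 => 1
  | n.+1 => if x' == x then 1 else
            if par x' is Some (y, a) then mu y a * segprod mu x n y else 1
  end.

(* mu_{h:}(x',a') with h = h(x), for x in the history of x' *)
Definition realh (mu : X -> A -> R) (x x' : X) (a' : A) : R :=
  mu x' a' * segprod mu x (depth x') x'.

(* kappa(mu^s) = max over policies (written as sup; the max is attained) *)
Definition kappa (mus : X -> A -> R) : R :=
  sup [set v | exists mu, policy mu /\
     v = \sum_(x : X) \sum_(a in acts x) real1 mu x a / real1 mus x a].

Definition kappa_at (mus : X -> A -> R) (x : X) : R :=
  sup [set v | exists mu, policy mu /\
     v = \sum_(x' : X | inhist x x') \sum_(a' in acts x')
            realh mu x x' a' / realh mus x x' a'].

Definition Atau_act (x : X) (a : A) : nat :=
  (1 + \sum_(x' : X | inhist_act x a x') #|acts x'|)%N.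

Definition Atau (x : X) : nat := (\sum_(a in acts x) Atau_act x a)%N.

Definition A_X : nat := (\sum_(x : X) #|acts x|)%N.

Definition mustar (x : X) (a : A) : R := (Atau_act x a)%:R / (Atau x)%:R.

End Defs.

(* Main.v *)
Require Import Defs.
From HB Require Import structures.
From mathcomp Require Import all_boot all_order all_algebra.
From mathcomp Require Import boolp classical_sets reals.
From mathcomp Require Import ring lra zify.
Import Order.TTheory GRing.Theory Num.Theory.
Local Open Scope ring_scope.

Set Implicit Arguments. Unset Strict Implicit. Unset Printing Implicit Defensive.

Section Tree.
Context (G : game).
Local Notation X := (Xt G).
Local Notation A := (Act G).

Lemma depth_ind (Q : X -> Prop) :
  (forall x, (forall y b, par x = Some (y, b) -> Q y) -> Q x) -> forall x, Q x.
Proof.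
move=> IH x; move: {2}(depth x) (leqnn (depth x)) => n; elim: n x => [|n IHn] x hx.
  by have := depth_range x; rewrite (leqNgt 1) (leq_ltn_trans hx).
apply: IH => y b /par_some [dx _]; apply: IHn; by rewrite -ltnS -dx.
Qed.

Lemma tree_ind (Q : X -> Prop) :
  (forall x, (forall c a, follows x a c -> Q c) -> Q x) -> forall x, Q x.
Proof.
move=> IH x; move: {2}(H G - depth x)%N (leqnn (H G - depth x)%N) => n.
elim: n x => [|n IHn] x hx; apply: IH => c a /eqP /par_some [dc _];
  have := depth_range c; rewrite dc => /andP [_ hc].
- by exfalso; move: hx hc; lia.
- apply: IHn; move: hx hc; lia.
Qed.

Lemma inhist_refl (x : X) : inhist x x.
Proof. by rewrite /inhist leqnn subnn /=. Qed.

Lemma inhist_depth (x x' : X) : inhist x x' -> (depth x <= depth x')%N.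
Proof. by case/andP. Qed.

Lemma inhist_same_depth (c1 c2 x' : X) : inhist c1 x' -> inhist c2 x' ->
  depth c1 = depth c2 -> c1 = c2.
Proof.
by case/andP => _ /eqP h1 /andP [_ /eqP]; move=> h2 e; move: h1 h2; rewrite e => -> [].
Qed.

Lemma inhist_up (z x' : X) : inhist z x' -> x' != z ->
  exists y b, par x' = Some (y, b) /\ inhist z y.
Proof.
case/andP => hd /eqP ha hne.
case k: (depth x' - depth z)%N ha => [|k'] /=.
  by move=> [e]; rewrite e eqxx in hne.
case p: (par x') => [[y b]|] // ha; exists y, b; split => //.
have [dy _] := par_some p.
apply/andP; split; first by move: k; rewrite dy; lia.
have -> : (depth y - depth z = k')%N by move: k; rewrite dy; lia.
by rewrite ha.
Qed.

Lemma inhist_down (z y x' : X) (b : A) : par x' = Some (y, b) -> inhist z y -> inhist z x'.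
Proof.
move=> p /andP [hd /eqP ha]; have [dy _] := par_some p.
apply/andP; split; first by rewrite dy; lia.
by rewrite dy subSn //= p ha.
Qed.


Lemma follows_depth (x c : X) (a : A) : follows x a c ->
  depth c = (depth x).+1 /\ a \in acts x.
Proof. by move/eqP/par_some. Qed.

Lemma inhist_trans (z y x' : X) : inhist z y -> inhist y x' -> inhist z x'.
Proof.
move=> hzy; elim/depth_ind: x' => x' IH hyx.
case: (eqVneq x' y) => [->//|ne].
have [y' [b [p hy']]] := inhist_up hyx ne.
exact: inhist_down p (IH _ _ p hy').
Qed.

Lemma child_inhist (x c x' : X) (a : A) : follows x a c -> inhist c x' ->
  inhist x x' /\ x != x'.
Proof.
move=> hf hc; have /eqP p := hf; have [dc _] := par_some p.
split; first exact: inhist_trans (inhist_down p (inhist_refl x)) hc.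
apply/eqP => e; have := inhist_depth hc; rewrite -e dc; lia.
Qed.

Lemma inhist_child (x x' : X) : inhist x x' -> x' != x ->
  exists c a, follows x a c /\ inhist c x'.
Proof.
elim/depth_ind: x' => x' IH hin hne.
have [y [b [p hy]]] := inhist_up hin hne.
case: (eqVneq y x) => [e|nyx].
  by exists x', b; split; [rewrite /follows p e|exact: inhist_refl].
have [c [a [hf hc]]] := IH _ _ p hy nyx.
by exists c, a; split => //; exact: inhist_down p hc.
Qed.

Lemma follows_uniq (x c1 c2 x' : X) (a1 a2 : A) :
  follows x a1 c1 -> inhist c1 x' -> follows x a2 c2 -> inhist c2 x' ->
  c1 = c2 /\ a1 = a2.
Proof.
move=> f1 h1 f2 h2.
have [d1 _] := follows_depth f1; have [d2 _] := follows_depth f2.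
have e := inhist_same_depth h1 h2 (etrans d1 (esym d2)).
split => //; move: f1 f2; rewrite /follows e => /eqP -> /eqP [] //.
Qed.

Section Sums.
Context (V : Type) (idx : V) (op : Monoid.com_law idx).
Local Notation "\bop_ ( i | P ) F" := (\big[op/idx]_(i | P) F)
  (at level 41, F at level 41, i at level 50).

Lemma sum_unique (I J : finType) (P : pred I) (Q : I -> pred J) (F : I -> V) :
  (forall i, P i -> exists j, Q i j) ->
  (forall i j1 j2, Q i j1 -> Q i j2 -> j1 = j2) ->
  (forall i j, Q i j -> P i) ->
  \big[op/idx]_(i | P i) F i = \big[op/idx]_j \big[op/idx]_(i | Q i j) F i.
Proof.
move=> ex un QP.
transitivity (\big[op/idx]_i \big[op/idx]_(j | Q i j) F i); last first.
  by rewrite (exchange_big_dep predT).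
rewrite big_mkcond /=; apply: eq_bigr => i _.
case: ifPn => Pi.
  have [j0 q0] := ex i Pi.
  rewrite (bigD1 j0) //= big1 ?Monoid.mulm1 // => j /andP [qj nj].
  by rewrite (un _ _ _ qj q0) eqxx in nj.
by rewrite big1 // => j qj; rewrite (QP _ _ qj) in Pi.
Qed.

Lemma big_cond_out (I J : finType) (P : pred J) (Q : J -> pred I) (F : I -> V) :
  \big[op/idx]_j \big[op/idx]_(i | P j && Q j i) F i =
  \big[op/idx]_(j | P j) \big[op/idx]_(i | Q j i) F i.
Proof.
rewrite [RHS]big_mkcond; apply: eq_bigr => j _.
by case: (P j) => //=; rewrite big1.
Qed.

Lemma decomp1 (x : X) (F : X -> V) :
  \big[op/idx]_(x' | inhist x x') F x' =
  op (F x) (\big[op/idx]_(a in acts x) \big[op/idx]_(x' | inhist_act x a x') F x').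
Proof.
rewrite (bigD1 x) ?inhist_refl //=; congr (op _ _).
rewrite -big_cond_out.
apply: sum_unique.
- move=> x' /andP [hin hne]; have [c [a [hf hc]]] := inhist_child hin hne.
  exists a; have [_ ha] := follows_depth hf.
  rewrite ha /inhist_act hin eq_sym hne /=; apply/existsP; exists c.
  by rewrite hc hf.
- move=> x' a1 a2 /andP [_ /and3P [_ _ /existsP [c1 /andP [h1 f1]]]].
  move=> /andP [_ /and3P [_ _ /existsP [c2 /andP [h2 f2]]]].
  by have [] := follows_uniq f1 h1 f2 h2.
- by move=> x' a /andP [_ /and3P [-> hne _]]; rewrite eq_sym hne.
Qed.

Lemma decomp2 (x : X) (a : A) (F : X -> V) :
  \big[op/idx]_(x' | inhist_act x a x') F x' =
  \big[op/idx]_(c | follows x a c) \big[op/idx]_(x' | inhist c x') F x'.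
Proof.
rewrite -big_cond_out; apply: sum_unique.
- move=> x' /and3P [_ _ /existsP [c /andP [h f]]]; exists c; by rewrite f h.
- move=> x' c1 c2 /andP [f1 h1] /andP [f2 h2].
  by have [] := follows_uniq f1 h1 f2 h2.
- move=> x' c /andP [f h]; have [hin hne] := child_inhist f h.
  rewrite /inhist_act hin hne /=; apply/existsP; exists c; by rewrite h f.
Qed.

Lemma decomp (x : X) (F : X -> V) :
  \big[op/idx]_(x' | inhist x x') F x' =
  op (F x) (\big[op/idx]_(a in acts x) \big[op/idx]_(c | follows x a c)
         \big[op/idx]_(x' | inhist c x') F x').
Proof.
rewrite decomp1; congr (op _ _); apply: eq_bigr => a _; exact: decomp2.
Qed.

Lemma root_exists (x : X) : exists r, (r \in X1 G) && inhist r x.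
Proof.
elim/depth_ind: x => x IH.
case p: (par x) => [[y b]|].
  have [r /andP [hr hy]] := IH _ _ p; exists r; by rewrite hr (inhist_down p hy).
exists x; rewrite inhist_refl andbT inE; apply/eqP; exact/par_none.
Qed.

Lemma decomp_root (F : X -> V) :
  \big[op/idx]_(x : X) F x =
  \big[op/idx]_(r in X1 G) \big[op/idx]_(x | inhist r x) F x.
Proof.
rewrite -big_cond_out; apply: sum_unique => //.
- by move=> x _; exact: root_exists.
- move=> x r1 r2 /andP [d1 h1] /andP [d2 h2]; apply: (inhist_same_depth h1 h2).
  by move: d1 d2; rewrite !inE => /eqP -> /eqP ->.
Qed.

End Sums.

End Tree.

Lemma sup_max (R : realType) (E : set R) (M : R) :
  E M -> (forall y, E y -> y <= M) -> sup E = M.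
Proof.
move=> EM ub; apply: le_anti; apply/andP; split.
  by apply: ge_sup; [exists M|move=> y; exact: ub].
by apply: ub_le_sup => //; exists M => y; exact: ub.
Qed.

Section Real.
Context (R : realType) (G : game).
Local Notation X := (Xt G).
Local Notation A := (Act G).

Lemma segprod_split (mu : X -> A -> R) (x c x' : X) (a : A) n :
  follows x a c -> inhist c x' -> (depth x' - depth x <= n)%N ->
  segprod mu x n x' = mu x a * segprod mu c n x'.
Proof.
move=> hf; have /eqP p := hf; have [dc _] := par_some p.
elim/depth_ind: x' n => x' IH n hc hn.
have [_ nx] := child_inhist hf hc; rewrite eq_sym in nx.
case: (eqVneq x' c) => [e|ne].
  subst x'; case: n hn => [|n] hn; first by move: hn; rewrite dc; lia.
  by rewrite /= (negbTE nx) eqxx p; case: n {hn} => [|n] /=; rewrite ?eqxx.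
have [y [b [py hy]]] := inhist_up hc ne.
have [dy _] := par_some py.
case: n hn => [|n] hn.
  by exfalso; move: hn (inhist_depth hc); rewrite dc; lia.
rewrite /= (negbTE nx) (negbTE ne) py (IH _ _ py) //; last by move: hn; rewrite dy; lia.
by rewrite mulrCA.
Qed.

Lemma realh_split (mu : X -> A -> R) (x c x' : X) (a a' : A) :
  follows x a c -> inhist c x' ->
  realh mu x x' a' = mu x a * realh mu c x' a'.
Proof.
by move=> hf hc; rewrite /realh (segprod_split _ hf hc) ?leq_subr // mulrCA.
Qed.

Lemma realh_self (mu : X -> A -> R) (x : X) (a : A) : realh mu x x a = mu x a.
Proof.
rewrite /realh; have := depth_range x; case: (depth x) => [//|n] _.
by rewrite /= eqxx mulr1.
Qed.

Lemma pathprod_seg (mu : X -> A -> R) (r x : X) n : r \in X1 G -> inhist r x ->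
  pathprod mu n x = segprod mu r n x.
Proof.
move=> hr; elim: n x => [//|n IH] x hx /=.
case: (eqVneq x r) => [e|ne].
  subst x; move: hr; rewrite inE => /eqP /par_none -> //.
have [y [b [p hy]]] := inhist_up hx ne.
by rewrite p IH.
Qed.

Definition Vf (mus mu : X -> A -> R) (x : X) : R :=
  \sum_(x' : X | inhist x x') \sum_(a' in acts x')
            realh mu x x' a' / realh mus x x' a'.

Lemma Vrec (mus mu : X -> A -> R) (x : X) :
  Vf mus mu x = \sum_(a in acts x) mu x a / mus x a *
                   (1 + \sum_(c | follows x a c) Vf mus mu c).
Proof.
rewrite /Vf (decomp (+%R : Monoid.com_law (0:R)) x) /=; under eq_bigr do rewrite !realh_self.
rewrite -big_split /=; apply: eq_bigr => a _.
rewrite mulrDr mulr1 mulr_sumr; congr (_ + _); apply: eq_bigr => c hf.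
rewrite mulr_sumr; apply: eq_bigr => x' hc.
rewrite mulr_sumr; apply: eq_bigr => a' _.
by rewrite (realh_split mu _ hf hc) (realh_split mus _ hf hc) invfM mulrACA.
Qed.

Lemma Wrec (mus mu : X -> A -> R) :
  \sum_(x : X) \sum_(a in acts x) Defs.real1 mu x a / Defs.real1 mus x a =
  \sum_(r in X1 G) Vf mus mu r.
Proof.
rewrite (decomp_root (+%R : Monoid.com_law (0:R)) (fun x => \sum_(a in acts x) Defs.real1 mu x a / Defs.real1 mus x a)); apply: eq_bigr => r hr; apply: eq_bigr => x hx.
by apply: eq_bigr => a _; rewrite /Defs.real1 /realh !(pathprod_seg _ _ hr hx).
Qed.

End Real.

Section Kap.
Context (R : realType) (G : game) (mus : Xt G -> Act G -> R).
Local Notation X := (Xt G).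
Local Notation A := (Act G).
Context (hpol : policy mus) (hpos : positive_policy mus).

Fixpoint Kf (n : nat) (x : X) : R :=
  if n is n'.+1 then
    \big[Num.max/0]_(a in acts x) (1 / mus x a * (1 + \sum_(c | follows x a c) Kf n' c))
  else 0.

Definition K (x : X) : R := Kf (H G - depth x).+1 x.

Lemma Krec (x : X) : K x =
  \big[Num.max/0]_(a in acts x) (1 / mus x a * (1 + \sum_(c | follows x a c) K c)).
Proof.
rewrite /K /=; apply: eq_bigr => a _; congr (_ * (1 + _)).
apply: eq_bigr => c /follows_depth [dc _]; rewrite /K.
have -> // : (H G - depth x = (H G - depth c).+1)%N.
by have := depth_range c; rewrite dc; lia.
Qed.

Lemma K_ge0 (x : X) : 0 <= K x.
Proof. by rewrite Krec bigmax_ge_id. Qed.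

Definition Fa (x : X) (a : A) : R := 1 / mus x a * (1 + \sum_(c | follows x a c) K c).

Lemma Fa_ge0 x a : a \in acts x -> 0 <= Fa x a.
Proof.
move=> ha; apply: mulr_ge0; first by rewrite divr_ge0 ?ltW ?hpos.
by rewrite addr_ge0 // sumr_ge0 // => c _; exact: K_ge0.
Qed.

Lemma Fa_le x a : a \in acts x -> Fa x a <= K x.
Proof. move=> ha; rewrite Krec. exact: (@le_bigmax_cond _ _ _ _ a (fun a => a \in acts x) (fun a => Fa x a) ha). Qed.

Definition mug (x : X) (a : A) : R :=
  if [pick a0 in acts x | K x == Fa x a0] is Some a0 then (a == a0)%:R else 0.

Lemma mug_spec x : exists a0, [/\ a0 \in acts x, K x = Fa x a0 &
   forall a, mug x a = (a == a0)%:R].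
Proof.
rewrite /mug; case: pickP => [a0 /andP [h /eqP e]|none].
  by exists a0; split.
have /set0Pn [a1 ha1] := acts_nonempty x.
have [a0 h0 e] := @eq_bigmax _ _ _ 0 a1 (fun a => a \in acts x) (fun a => Fa x a) ha1 (@Fa_ge0 x).
have := none a0; rewrite h0 /= Krec -/(Fa x _).
by rewrite -e eqxx.
Qed.

Lemma mug_policy : policy mug.
Proof.
move=> x; have [a0 [h0 _ e]] := mug_spec x; split.
  by move=> a _; rewrite e ler0n.
rewrite (bigD1 a0) //= e eqxx big1 ?addr0 // => a /andP [_ /negbTE na].
by rewrite e na.
Qed.

Lemma main_K (x : X) :
  (forall mu, policy mu -> Vf mus mu x <= K x) /\ Vf mus mug x = K x.
Proof.
elim/tree_ind: x => x IH; split.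
  move=> mu hmu; rewrite Vrec.
  apply: (@le_trans _ _ (\sum_(a in acts x) mu x a * Fa x a)).
    apply: ler_sum => a ha; rewrite /Fa mul1r mulrA.
    apply: ler_wpM2l; first by rewrite divr_ge0 ?(hmu x).1 ?ltW ?hpos.
    rewrite lerD2l.
    by apply: ler_sum => c hc; exact: (IH c a hc).1.
  apply: (@le_trans _ _ (\sum_(a in acts x) mu x a * K x)).
    by apply: ler_sum => a ha; apply: ler_wpM2l; [exact: (hmu x).1|exact: Fa_le].
  by rewrite -mulr_suml (hmu x).2 mul1r.
have [a0 [h0 eK e]] := mug_spec x.
rewrite Vrec (bigD1 a0) //= [X in _ + X]big1 ?addr0; last first.
  by move=> a /andP [_ /negbTE na]; rewrite e na /= mulr0n !mul0r.
rewrite e eqxx eK /Fa; congr (_ * (1 + _)).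
by apply: eq_bigr => c hc; exact: (IH c a0 hc).2.
Qed.

Lemma kappa_atE (x : X) : kappa_at mus x = K x.
Proof.
apply: sup_max.
  by exists mug; split; [exact: mug_policy|exact/esym/(main_K x).2].
by move=> v [mu [hmu ->]]; exact: (main_K x).1.
Qed.

Lemma kappaE : kappa mus = \sum_(r in X1 G) K r.
Proof.
apply: sup_max.
  exists mug; split; first exact: mug_policy.
  rewrite Wrec; apply: eq_bigr => r _; exact/esym/(main_K r).2.
move=> v [mu [hmu ->]]; rewrite Wrec; apply: ler_sum => r _.
exact: (main_K r).1.
Qed.

End Kap.

Section Atau.
Context (G : game).
Local Notation X := (Xt G).
Local Notation A := (Act G).

Lemma AtauS (x : X) : Atau x = (\sum_(x' | inhist x x') #|acts x'|)%N.
Proof.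
rewrite (decomp1 addn) /Atau /Atau_act big_split /= sum1_card.
by [].
Qed.

Lemma Atau_act_rec (x : X) (a : A) :
  Atau_act x a = (1 + \sum_(c | follows x a c) Atau c)%N.
Proof.
rewrite /Atau_act (decomp2 addn); congr (1 + _)%N.
by apply: eq_bigr => c _; rewrite AtauS.
Qed.

Lemma Atau_act_gt0 (x : X) (a : A) : (0 < Atau_act x a)%N.
Proof. by rewrite /Atau_act. Qed.

Lemma Atau_gt0 (x : X) : (0 < Atau x)%N.
Proof.
have /set0Pn [a ha] := acts_nonempty x.
by rewrite /Atau (bigD1 a) //= addn_gt0 Atau_act_gt0.
Qed.

Lemma A_X_sum : A_X G = (\sum_(r in X1 G) Atau r)%N.
Proof.
rewrite /A_X (decomp_root addn); apply: eq_bigr => r _; by rewrite AtauS.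
Qed.

End Atau.

Section Final.
Context (R : realType) (G : game).
Local Notation X := (Xt G).
Local Notation A := (Act G).

Lemma Atau_le_K (mus : X -> A -> R) : policy mus -> positive_policy mus ->
  forall x, (Atau x)%:R <= K mus x.
Proof.
move=> hpol hpos; elim/tree_ind => x IH.
rewrite /Atau natr_sum.
apply: (@le_trans _ _ (\sum_(a in acts x) mus x a * Fa mus x a)).
  apply: ler_sum => a ha.
  rewrite Atau_act_rec natrD natr_sum /Fa mulrA mul1r divff ?mul1r; last first.
    by rewrite lt0r_neq0 ?hpos.
  rewrite lerD2l; apply: ler_sum => c hc; exact: IH hc.
apply: (@le_trans _ _ (\sum_(a in acts x) mus x a * K mus x)).
  apply: ler_sum => a ha; apply: ler_wpM2l; [exact: (hpol x).1|exact: Fa_le].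
by rewrite -mulr_suml (hpol x).2 mul1r.
Qed.

Lemma mustar_pos : positive_policy (@mustar R G).
Proof.
move=> x a _; rewrite /mustar divr_gt0 // ltr0n ?Atau_act_gt0 ?Atau_gt0 //.
Qed.

Lemma mustar_pol : policy (@mustar R G).
Proof.
move=> x; split.
  by move=> a _; rewrite /mustar divr_ge0 ?ler0n.
rewrite /mustar -mulr_suml -natr_sum.
change (\sum_(a in acts x) Atau_act x a)%N with (Atau x).
by rewrite divff // pnatr_eq0 -lt0n Atau_gt0.
Qed.

Lemma Kstar (x : X) : K (@mustar R G) x = (Atau x)%:R.
Proof.
elim/tree_ind: x => x IH.
rewrite Krec.
have -> : \big[Num.max/0]_(a in acts x)
    (1 / @mustar R G x a * (1 + \sum_(c | follows x a c) K (@mustar R G) c)) =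
    \big[Num.max/0]_(a in acts x) ((Atau x)%:R : R).
  apply: eq_bigr => a ha.
  have -> : \sum_(c | follows x a c) K (@mustar R G) c =
            \sum_(c | follows x a c) ((Atau c)%:R : R).
    by apply: eq_bigr => c hc; exact: IH hc.
  have -> : 1 + \sum_(c | follows x a c) ((Atau c)%:R : R) = (Atau_act x a)%:R.
    by rewrite Atau_act_rec natrD natr_sum.
  rewrite /mustar.
  by rewrite div1r invf_div divfK // pnatr_eq0 -lt0n Atau_act_gt0.
have /set0Pn [a1 ha1] := acts_nonempty x.
apply: le_anti; rewrite bigmax_le ?ler0n //=.
exact: (@bigmax_sup _ _ _ 0 a1 (fun a => a \in acts x) _ (fun _ => (Atau x)%:R) ha1 (lexx _)).
Qed.

End Final.

Theorem mainTheorem10 (R : realType) (G : game) :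
  (forall mus : Xt G -> Act G -> R, policy mus -> positive_policy mus ->
    [/\ (* (a) *)
        (forall x : Xt G,
           kappa_at mus x =
           \big[Num.max/0]_(a in acts x)
              (1 / mus x a * (1 + \sum_(x' : Xt G | follows x a x') kappa_at mus x'))),
        (* (b) *)
        kappa mus = \sum_(x in X1 G) kappa_at mus x
      & (* (c), inequality *)
        (forall x : Xt G, (Atau x)%:R <= kappa_at mus x)]) /\
  (* (c), equality for the balanced policy *)
  (forall x : Xt G, kappa_at (@mustar R G) x = (Atau x)%:R) /\
  (* (d) *)
  kappa (@mustar R G) = (A_X G)%:R.
Proof.
split.
  move=> mus hpol hpos; split.
  - move=> x; rewrite (kappa_atE hpos) Krec; apply: eq_bigr => a _.
    congr (_ * (1 + _)); apply: eq_bigr => c _; by rewrite (kappa_atE hpos).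
  - by rewrite (kappaE hpos); apply: eq_bigr => r _; rewrite (kappa_atE hpos).
  - by move=> x; rewrite (kappa_atE hpos); exact: Atau_le_K.
split.
  by move=> x; rewrite (kappa_atE (@mustar_pos R G)) Kstar.
rewrite (kappaE (@mustar_pos R G)) A_X_sum natr_sum.
by apply: eq_bigr => r _; rewrite Kstar.
Qed.
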